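(* Let $\mathcal{A},\mathcal{C}$ be small categories. Consider the following paracategories (structures like categories but where composition need not be defined): $[\mathcal{C}^\diamond,\mathbf{Set}]$, with objects functors $\mathcal{C}^{op}\times\mathcal{C}\to\mathbf{Set}$ and morphisms dinatural transformations; $[\mathcal{A}^{op}\times\mathcal{A}\times\mathcal{C}^\diamond,\mathbf{Set}]$, with objects functors $P:\mathcal{A}^{op}\times\mathcal{A}\times\mathcal{C}^{op}\times\mathcal{C}\to\mathbf{Set}$ and morphisms $P\to Q$ the families $\alpha_{a,b,x}:P(a,b,x,x)\to Q(a,b,x,x)$ natural in $a\in\mathcal{A}^{op}$, $b\in\mathcal{A}$ and dinatural in $x\in\mathcal{C}$; and $[\mathcal{A}^\diamond\times\mathcal{C}^\diamond,\mathbf{Set}]$, with the same objects and morphisms $P\to Q$ the families $\alpha_{z,x}:P(z,z,x,x)\to Q(z,z,x,x)$ dinatural in $(z,x)\in\mathcal{A}\times\mathcal{C}$. Define the (para)functors: $\pi_{\mathcal{A}}^*:[\mathcal{C}^\diamond,\mathbf{Set}]\to[\mathcal{A}^\diamond\times\mathcal{C}^\diamond,\mathbf{Set}]$ by precomposition with the projection, $\pi_{\mathcal{A}}^*(\Gamma)(z',z,x',x)=\Gamma(x',x)$, $(\pi^*_{\mathcal{A}}\alpha)_{z,x}=\alpha_x$; $\hom_{\mathcal{A}}\times-:[\mathcal{C}^\diamond,\mathbf{Set}]\to[\mathcal{A}^{op}\times\mathcal{A}\times\mathcal{C}^\diamond,\mathbf{Set}]$ by $(\hom_{\mathcal{A}}\times\Gamma)(a,b,x',x)=\hom_{\mathcal{A}}(a,b)\times\Gamma(x',x)$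 and $(\hom_{\mathcal{A}}\times\alpha)_{a,b,x}(e,k)=(e,\alpha_x(k))$; and $\Delta_{\mathcal{A}}\times-:[\mathcal{A}^{op}\times\mathcal{A}\times\mathcal{C}^\diamond,\mathbf{Set}]\to[\mathcal{A}^\diamond\times\mathcal{C}^\diamond,\mathbf{Set}]$ by the identity on objects and $(\Delta_{\mathcal{A}}\times\alpha)_{z,x}=\alpha_{z,z,x}$. Then $\hom_{\mathcal{A}}\times-$ is a $\pi^*_{\mathcal{A}}$-relative left adjoint of $\Delta_{\mathcal{A}}\times-$, i.e. there is a bijection $$[\mathcal{A}^{op}\times\mathcal{A}\times\mathcal{C}^\diamond,\mathbf{Set}](\hom_{\mathcal{A}}\times\Gamma,P)\cong[\mathcal{A}^\diamond\times\mathcal{C}^\diamond,\mathbf{Set}](\pi^*_{\mathcal{A}}\Gamma,\Delta_{\mathcal{A}}\times P)$$ natural in $\Gamma\in[\mathcal{C}^\diamond,\mathbf{Set}]$ and $P\in[\mathcal{A}^{op}\times\mathcal{A}\times\mathcal{C}^\diamond,\mathbf{Set}]$.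
   Context: For difunctors $F,G:\mathcal{B}^{op}\times\mathcal{B}\to\mathcal{D}$, a dinatural transformation is a family $\alpha_x:F(x,x)\to G(x,x)$ such that for every $f:a\to b$: $G(f,\mathrm{id}_b)\circ\alpha_b\circ F(\mathrm{id}_b,f)=G(\mathrm{id}_a,f)\circ\alpha_a\circ F(f,\mathrm{id}_a)$. Given functors $L:\mathcal{C}\to\mathcal{D}$, $R:\mathcal{D}\to\mathcal{X}$, $J:\mathcal{C}\to\mathcal{X}$, $L$ is a $J$-relative left adjoint of $R$ if $\mathcal{D}(L(x),y)\cong\mathcal{X}(J(x),R(y))$ naturally in $x\in\mathcal{C}$, $y\in\mathcal{D}$. *)

(* Defs.v *)
Set Implicit Arguments.
Unset Strict Implicit.

Record Cat := {
  ob :> Type;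
  hom : ob -> ob -> Type;
  idc : forall a, hom a a;
  comp : forall a b c, hom b c -> hom a b -> hom a c;
  comp_id_l : forall a b (f : hom a b), comp (idc b) f = f;
  comp_id_r : forall a b (f : hom a b), comp f (idc a) = f;
  comp_assoc : forall a b c d (f : hom a b) (g : hom b c) (h : hom c d),
      comp h (comp g f) = comp (comp h g) f
}.

Arguments idc {C} a : rename.
Arguments comp {C a b c} : rename.
Arguments hom {C} : rename.

Record Difun (C : Cat) := {
  d0 :> C -> C -> Type;
  dmap : forall (a a' b b' : C), hom a' a -> hom b b' -> d0 a b -> d0 a' b';
  dmap_id : forall a b (u : d0 a b), dmap (idc a) (idc b) u = u;
  dmap_comp : forall a a' a'' b b' b''
      (f : hom a' a) (f' : hom a'' a') (g : hom b b') (g' : hom b' b'') u,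
      dmap (comp f f') (comp g' g) u = dmap f' g' (dmap f g u)
}.
Arguments dmap {C} F {a a' b b'} : rename.

Definition dinatural (C : Cat) (F G : Difun C)
  (alpha : forall x : C, F x x -> G x x) : Prop :=
  forall (a b : C) (f : hom a b) (u : F b a),
    dmap G f (idc b) (alpha b (dmap F (idc b) f u))
    = dmap G (idc a) f (alpha a (dmap F f (idc a) u)).

Definition DiMor (C : Cat) (F G : Difun C) : Type :=
  { alpha : forall x : C, F x x -> G x x | dinatural alpha }.

Record Quadfun (A C : Cat) := {
  q0 :> A -> A -> C -> C -> Type;
  qmap : forall (a a' b b' : A) (x x' y y' : C),
      hom a' a -> hom b b' -> hom x' x -> hom y y' ->
      q0 a b x y -> q0 a' b' x' y';
  qmap_id : forall a b x y (u : q0 a b x y),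
      qmap (idc a) (idc b) (idc x) (idc y) u = u;
  qmap_comp : forall a a' a'' b b' b'' x x' x'' y y' y''
      (e : hom a' a) (e' : hom a'' a') (g : hom b b') (g' : hom b' b'')
      (f : hom x' x) (f' : hom x'' x') (h : hom y y') (h' : hom y' y'') u,
      qmap (comp e e') (comp g' g) (comp f f') (comp h' h) u
      = qmap e' g' f' h' (qmap e g f h u)
}.
Arguments qmap {A C} P {a a' b b' x x' y y'} : rename.

Definition isM1 (A C : Cat) (P Q : Quadfun A C)
  (alpha : forall (a b : A) (x : C), P a b x x -> Q a b x x) : Prop :=
  (forall (a a' b : A) (x : C) (e : hom a' a) (u : P a b x x),
      qmap Q e (idc b) (idc x) (idc x) (alpha a b x u)
      = alpha a' b x (qmap P e (idc b) (idc x) (idc x) u)) /\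
  (forall (a b b' : A) (x : C) (g : hom b b') (u : P a b x x),
      qmap Q (idc a) g (idc x) (idc x) (alpha a b x u)
      = alpha a b' x (qmap P (idc a) g (idc x) (idc x) u)) /\
  (forall (a b : A) (x y : C) (f : hom x y) (u : P a b y x),
      qmap Q (idc a) (idc b) f (idc y)
        (alpha a b y (qmap P (idc a) (idc b) (idc y) f u))
      = qmap Q (idc a) (idc b) (idc x) f
        (alpha a b x (qmap P (idc a) (idc b) f (idc x) u))).

Definition M1 (A C : Cat) (P Q : Quadfun A C) : Type :=
  { alpha : forall (a b : A) (x : C), P a b x x -> Q a b x x | isM1 alpha }.

Definition isM2 (A C : Cat) (P Q : Quadfun A C)
  (alpha : forall (z : A) (x : C), P z z x x -> Q z z x x) : Prop :=
  forall (z w : A) (x y : C) (g : hom z w) (f : hom x y) (u : P w z y x),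
    qmap Q g (idc w) f (idc y) (alpha w y (qmap P (idc w) g (idc y) f u))
    = qmap Q (idc z) g (idc x) f (alpha z x (qmap P g (idc z) f (idc x) u)).

Definition M2 (A C : Cat) (P Q : Quadfun A C) : Type :=
  { alpha : forall (z : A) (x : C), P z z x x -> Q z z x x | isM2 alpha }.

Definition piStar_obj (A C : Cat) (G : Difun C) : A -> A -> C -> C -> Type :=
  fun _ _ x' x => G x' x.

Definition piStar (A C : Cat) (G : Difun C) : Quadfun A C.
Proof.
  refine {| q0 := @piStar_obj A C G;
            qmap := fun a a' b b' x x' y y' e g f h u => dmap G f h u |}.
  - intros; apply dmap_id.
  - intros; apply dmap_comp.
Defined.

Definition homTimes_obj (A C : Cat) (G : Difun C) : A -> A -> C -> C -> Type :=
  fun a b x' x => (hom a b * G x' x)%type.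

Definition homTimes (A C : Cat) (G : Difun C) : Quadfun A C.
Proof.
  refine {| q0 := @homTimes_obj A C G;
            qmap := fun a a' b b' x x' y y' e g f h u =>
              (comp g (comp (fst u) e), dmap G f h (snd u)) |}.
  - intros a b x y [k c]; simpl.
    rewrite comp_id_r, comp_id_l, dmap_id; reflexivity.
  - intros a a' a'' b b' b'' x x' x'' y y' y'' e e' g g' f f' h h' [k c];
      simpl.
    rewrite dmap_comp. f_equal.
    rewrite !comp_assoc. reflexivity.
Defined.

(* Delta_A x - is the identity on objects: a morphism
   pi^* Gamma -> Delta_A x P in [A^<> x C^<>, Set] is an element of
   M2 (piStar Gamma) P. *)

Definition leftComposite (A C : Cat) (G G' : Difun C) (P P' : Quadfun A C)
  (beta : DiMor G' G) (gamma : M1 P P') (h : M1 (homTimes A G) P) :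
  forall (a b : A) (x : C), homTimes A G' a b x x -> P' a b x x :=
  fun a b x p =>
    proj1_sig gamma a b x (proj1_sig h a b x (fst p, proj1_sig beta x (snd p))).

Definition rightComposite (A C : Cat) (G G' : Difun C) (P P' : Quadfun A C)
  (beta : DiMor G' G) (gamma : M1 P P') (k : M2 (piStar A G) P) :
  forall (z : A) (x : C), piStar A G' z z x x -> P' z z x x :=
  fun z x c => proj1_sig gamma z z x (proj1_sig k z x (proj1_sig beta x c)).

Definition is_bijection (X Y : Type) (f : X -> Y) : Prop :=
  exists g : Y -> X, (forall x, g (f x) = x) /\ (forall y, f (g y) = y).

Arguments leftComposite {A C G G' P P'} beta gamma h a b x _.
Arguments rightComposite {A C G G' P P'} beta gamma k z x _.

(* Main.v *)
Require Import Defs.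
Set Implicit Arguments.
From Stdlib Require Import FunctionalExtensionality ProofIrrelevance.

Lemma qsplit1 (A C : Cat) (P : Quadfun A C) a a' b b' x x' y y'
  (e : hom a' a) (g : hom b b') (f : hom x' x) (h : hom y y') u :
  qmap P e g f h u = qmap P (idc _) (idc _) f h (qmap P e g (idc _) (idc _) u).
Proof. rewrite <- qmap_comp. rewrite ?comp_id_l, ?comp_id_r. reflexivity. Qed.

Lemma qsplit2 (A C : Cat) (P : Quadfun A C) a a' b b' x x' y y'
  (e : hom a' a) (g : hom b b') (f : hom x' x) (h : hom y y') u :
  qmap P e g f h u = qmap P e g (idc _) (idc _) (qmap P (idc _) (idc _) f h u).
Proof. rewrite <- qmap_comp. rewrite ?comp_id_l, ?comp_id_r. reflexivity. Qed.

Lemma qsplit3 (A C : Cat) (P : Quadfun A C) a a' b b' x y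
  (e : hom a' a) (g : hom b b') u :
  qmap P e g (idc x) (idc y) u = qmap P (idc _) g (idc _) (idc _) (qmap P e (idc _) (idc _) (idc _) u).
Proof. rewrite <- qmap_comp. rewrite ?comp_id_l, ?comp_id_r. reflexivity. Qed.

Lemma qsplit4 (A C : Cat) (P : Quadfun A C) a b x x' y y'
  (f : hom x' x) (h : hom y y') u :
  qmap P (idc a) (idc b) f h u = qmap P (idc _) (idc _) (idc _) h (qmap P (idc _) (idc _) f (idc _) u).
Proof. rewrite <- qmap_comp. rewrite ?comp_id_l, ?comp_id_r. reflexivity. Qed.

Lemma qswap (A C : Cat) (P : Quadfun A C) a b b' x x' y
  (g : hom b b') (f : hom x' x) u :
  qmap P (idc a) (idc b') f (idc y) (qmap P (idc a) g (idc x) (idc y) u)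
  = qmap P (idc a) g (idc x') (idc y) (qmap P (idc a) (idc b) f (idc y) u).
Proof. rewrite <- !qmap_comp. rewrite ?comp_id_l, ?comp_id_r. reflexivity. Qed.

Lemma diag_M2 (A C : Cat) (G : Difun C) (P : Quadfun A C) L
  (HL : @isM1 A C (homTimes A G) P L) :
  @isM2 A C (piStar A G) P (fun z x c => L z z x (idc z, c)).
Proof.
  destruct HL as [Ha [Hb Hx]].
  intros z w x y g f u; cbn.
  rewrite qsplit1, Ha. cbn. rewrite ?comp_id_l, ?comp_id_r, dmap_id.
  rewrite (@qsplit1 _ _ P _ _ _ _ _ _ _ _ (idc z) g), Hb. cbn. rewrite ?comp_id_l, ?comp_id_r, dmap_id.
  generalize (Hx z w x y f (g, u)). cbn. rewrite ?comp_id_l, ?comp_id_r.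
  intros ->. reflexivity.
Qed.

Lemma qswap2 (A C : Cat) (P : Quadfun A C) a b b' x y y'
  (g : hom b b') (h : hom y y') u :
  qmap P (idc a) (idc b') (idc x) h (qmap P (idc a) g (idc x) (idc y) u)
  = qmap P (idc a) g (idc x) (idc y') (qmap P (idc a) (idc b) (idc x) h u).
Proof. rewrite <- !qmap_comp. rewrite ?comp_id_l, ?comp_id_r. reflexivity. Qed.

Lemma diag_M2_inv (A C : Cat) (G : Difun C) (P : Quadfun A C) L
  (Hb : forall (a b b' : A) (x : C) (g : hom b b') (u : homTimes A G a b x x),
      qmap P (idc a) g (idc x) (idc x) (L a b x u)
      = L a b' x (qmap (homTimes A G) (idc a) g (idc x) (idc x) u))
  (H2 : @isM2 A C (piStar A G) P (fun z x c => L z z x (idc z, c))) :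
  forall (a b : A) (x y : C) (f : hom x y) (u : homTimes A G a b y x),
  qmap P (idc a) (idc b) f (idc y)
    (L a b y (qmap (homTimes A G) (idc a) (idc b) (idc y) f u)) =
  qmap P (idc a) (idc b) (idc x) f
    (L a b x (qmap (homTimes A G) (idc a) (idc b) f (idc x) u)).
Proof.
  intros a b x y f [e c]; cbn.
  rewrite ?comp_id_l, ?comp_id_r.
  assert (Hs : forall x0 (d : G x0 x0), L a b x0 (e, d)
     = qmap P (idc a) e (idc x0) (idc x0) (L a a x0 (idc a, d))).
  { intros x0 d. rewrite Hb. cbn. rewrite ?comp_id_l, ?comp_id_r, dmap_id. reflexivity. }
  rewrite !Hs, qswap, qswap2. f_equal.
  generalize (H2 a a x y (idc a) f c). cbn. auto.
Qed.

Lemma psi_M1 (A C : Cat) (G : Difun C) (P : Quadfun A C) k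
  (K : @isM2 A C (piStar A G) P k) :
  @isM1 A C (homTimes A G) P
    (fun a b x p => qmap P (idc a) (fst p) (idc x) (idc x) (k a x (snd p))).
Proof.
  split; [|split].
  - intros a a' b x e [e0 c]; cbn.
    rewrite dmap_id, ?comp_id_l.
    rewrite <- qmap_comp, ?comp_id_l, ?comp_id_r.
    rewrite qsplit3.
    generalize (K a' a x x e (idc x) c). cbn. rewrite dmap_id. intros ->.
    rewrite <- qmap_comp, ?comp_id_l, ?comp_id_r. reflexivity.
  - intros a b b' x g [e0 c]; cbn.
    rewrite dmap_id, <- qmap_comp, ?comp_id_l, ?comp_id_r. reflexivity.
  - intros a b x y f [e0 c]; cbn.
    rewrite ?comp_id_l, ?comp_id_r.
    rewrite qswap, qswap2. f_equal.
    generalize (K a a x y (idc a) f c). cbn. auto.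
Qed.

Lemma sig_eq (T : Type) (Q : T -> Prop) (x y : sig Q) :
  proj1_sig x = proj1_sig y -> x = y.
Proof.
  destruct x as [x px], y as [y py]; cbn; intros ->.
  f_equal; apply proof_irrelevance.
Qed.

Theorem mainTheorem3 (A C : Cat) :
  exists phi : forall (G : Difun C) (P : Quadfun A C),
      M1 (homTimes A G) P -> M2 (piStar A G) P,
    (forall G P, is_bijection (phi G P)) /\
    (forall (G G' : Difun C) (P P' : Quadfun A C)
            (beta : DiMor G' G) (gamma : M1 P P') (h : M1 (homTimes A G) P),
        (isM1 (leftComposite beta gamma h) <->
         isM2 (rightComposite beta gamma (phi G P h))) /\
        (forall H : isM1 (leftComposite beta gamma h),
           forall (z : A) (x : C) (c : G' x x),
             proj1_sig (phi G' P' (exist _ (leftComposite beta gamma h) H)) z x c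
             = rightComposite beta gamma (phi G P h) z x c)).
Proof.
  exists (fun G P h => exist _ (fun z x (c : piStar A G z z x x) => proj1_sig h z z x (idc z, c))
                        (diag_M2 (proj2_sig h))).
  split.
  - intros G P.
    exists (fun k => exist _ _ (psi_M1 (proj2_sig k))).
    split.
    + intros [L HL]. apply sig_eq; cbn.
      destruct HL as [Ha [Hb Hx]].
      apply functional_extensionality_dep; intro a.
      apply functional_extensionality_dep; intro b.
      apply functional_extensionality_dep; intro x.
      apply functional_extensionality_dep; intros [e c]; cbn.
      rewrite Hb; cbn. rewrite ?comp_id_l, ?comp_id_r, dmap_id. reflexivity.
    + intros [k K]. apply sig_eq; cbn.
      apply functional_extensionality_dep; intro z.
      apply functional_extensionality_dep; intro x.
      apply functional_extensionality_dep; intro c.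
      apply qmap_id.
  - intros G G' P P' beta gamma h.
    destruct gamma as [g [ga [gb gx]]], h as [L [Ha [Hb Hx]]].
    split; [split|].
    + intro H. exact (diag_M2 H).
    + intro H2.
      assert (HB : forall (a b b' : A) (x : C) (g0 : hom b b') u,
        qmap P' (idc a) g0 (idc x) (idc x) (leftComposite beta (exist _ g (conj ga (conj gb gx))) (exist _ L (conj Ha (conj Hb Hx))) a b x u)
        = leftComposite beta (exist _ g (conj ga (conj gb gx))) (exist _ L (conj Ha (conj Hb Hx))) a b' x
            (qmap (homTimes A G') (idc a) g0 (idc x) (idc x) u)).
      { intros a b b' x g0 [e0 c]; unfold leftComposite; cbn.
        rewrite gb, Hb; cbn. rewrite !dmap_id. reflexivity. }
      split; [|split].
      * intros a a' b x e [e0 c]; unfold leftComposite; cbn.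
        rewrite ga, Ha; cbn. rewrite !dmap_id. reflexivity.
      * exact HB.
      * eapply diag_M2_inv; [exact HB | exact H2].
    + intros; reflexivity.
Qed.
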